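(* Suppose a graph $G$ has nonadjacent simplicial vertices $u$ and $v$ with $N(u)\cap N(v)\neq\emptyset$, and there exist distinct vertices $x\in N(u)$ and $y\in N(v)$ that are nonadjacent. Then $G$ is not well-bicovered.
   Context: All graphs are finite and simple; ''subgraph'' means induced subgraph. $N(w)$ is the open neighborhood of $w$. A vertex is simplicial if its neighborhood induces a complete graph. A graph is well-bicovered if every vertex-inclusion-maximal induced bipartite subgraph has the same order. *)

(* Defs.v *)
From mathcomp Require Import all_boot.
Set Implicit Arguments. Unset Strict Implicit. Unset Printing Implicit Defensive.

Definition simple_graph (T : finType) (e : rel T) : Prop :=
  symmetric e /\ irreflexive e.

Definition nbhd (T : finType) (e : rel T) (w : T) : {set T} := [set x | e w x].

Definition simplicial (T : finType) (e : rel T) (w : T) : Prop :=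
  forall x y, x \in nbhd e w -> y \in nbhd e w -> x != y -> e x y.

Definition independent (T : finType) (e : rel T) (A : {set T}) : Prop :=
  forall x y, x \in A -> y \in A -> ~~ e x y.

Definition induces_bipartite (T : finType) (e : rel T) (S : {set T}) : Prop :=
  exists A B : {set T}, [/\ A :|: B = S, [disjoint A & B],
                           independent e A & independent e B].

Definition maximal_bipartite (T : finType) (e : rel T) (S : {set T}) : Prop :=
  induces_bipartite e S /\
  forall S' : {set T}, S \proper S' -> ~ induces_bipartite e S'.

Definition well_bicovered (T : finType) (e : rel T) : Prop :=
  forall S1 S2 : {set T}, maximal_bipartite e S1 -> maximal_bipartite e S2 ->
    #|S1| = #|S2|.

(* Main.v *)
Require Import Defs.
From mathcomp Require Import all_boot.
From mathcomp Require Import zify.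
From Stdlib Require Import Classical.

Lemma exists_max (T : finType) (P : {set T} -> Prop) (S0 : {set T}) :
  P S0 -> exists S, [/\ P S, S0 \subset S & forall S' : {set T}, S \proper S' -> ~ P S'].
Proof.
move=> H0; move: {2}(#|T| - #|S0|) (leqnn (#|T| - #|S0|)) => n.
elim: n S0 H0 => [|n IH] S0 H0 Hn.
  exists S0; split=> // S' HS' PS'.
  have := proper_card HS'; have := max_card S'; lia.
case: (classic (exists S' : {set T}, S0 \proper S' /\ P S')) => [[S' [HS' PS']]|Hno].
  have [|S [PS sub mx]] := IH S' PS'.
    have := proper_card HS'; have := max_card S'; lia.
  by exists S; split => //; apply: subset_trans (proper_sub HS') sub.
by exists S0; split=> // S' HS' PS'; apply: Hno; exists S'.
Qed.

Theorem mainTheorem16 (T : finType) (e : rel T) :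
  simple_graph e ->
  forall u v : T,
    simplicial e u -> simplicial e v -> u != v -> ~~ e u v ->
    nbhd e u :&: nbhd e v != set0 ->
    (exists x y : T, [/\ x \in nbhd e u, y \in nbhd e v, x != y & ~~ e x y]) ->
    ~ well_bicovered e.
Proof.
move=> [sym irr] u v su sv uv nuv /set0Pn [w] /setIP [wu wv] [x [y [xu yv xy nxy]]] wb.
have nyx : ~~ e y x by rewrite sym.
have xnv : x \notin nbhd e v.
  apply/negP => xv; by move/negP: nxy; apply; apply: sv.
have ynu : y \notin nbhd e u.
  apply/negP => yu; by move/negP: nyx; apply; apply: su; rewrite // eq_sym.
have wx : w != x by apply/eqP => E; move: xnv; rewrite -E wv.
have wy : w != y by apply/eqP => E; move: ynu; rewrite -E wu.
have ewx : e w x by apply: su.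
have ewy : e w y by apply: sv.
have nbE : forall a b, (b \in nbhd e a) = e a b by move=> a b; rewrite /nbhd inE.
rewrite !nbE in wu wv xu yv xnv ynu.
have B0 : induces_bipartite e (w |: [set x; y]).
  exists [set w], [set x; y]; split => //.
  - by rewrite disjoints1 !inE negb_or wx wy.
  - by move=> a b /set1P-> /set1P->; rewrite irr.
  - by move=> a b /set2P[]-> /set2P[]->; rewrite ?irr.
have [S1 [hS1 sub1 mx1]] := @exists_max _ _ _ B0.
have wS1 : w \in S1 by apply: (subsetP sub1); rewrite !inE eqxx.
have xS1 : x \in S1 by apply: (subsetP sub1); rewrite !inE eqxx ?orbT.
have yS1 : y \in S1 by apply: (subsetP sub1); rewrite !inE eqxx ?orbT.
have key : forall A B : {set T}, A :|: B = S1 -> [disjoint A & B] ->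
    independent e A -> independent e B -> w \in A ->
    exists S' : {set T}, induces_bipartite e S' /\ #|S1| < #|S'|.
  move=> A B AB dAB iA iB wA.
  have wB : (w \in B) = false by apply: disjointFr dAB wA.
  have xB : x \in B.
    move: xS1; rewrite -AB inE => /orP[xA|//].
    by move: (iA _ _ wA xA); rewrite ewx.
  have yB : y \in B.
    move: yS1; rewrite -AB inE => /orP[yA|//].
    by move: (iA _ _ wA yA); rewrite ewy.
  have xA : (x \in A) = false by apply/negbTE/negP => xA; move: (disjointFr dAB xA); rewrite xB.
  have yA : (y \in A) = false by apply/negbTE/negP => yA; move: (disjointFr dAB yA); rewrite yB.
  have uB : (u \in B) = false by apply/negbTE/negP => uB; move: (iB _ _ uB xB); rewrite xu.
  have vB : (v \in B) = false by apply/negbTE/negP => vB; move: (iB _ _ vB yB); rewrite yv.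
  have uA : (u \in A) = false by apply/negbTE/negP => uA; move: (iA _ _ uA wA); rewrite wu.
  have vA : (v \in A) = false by apply/negbTE/negP => vA; move: (iA _ _ vA wA); rewrite wv.
  have uS1 : (u \in S1) = false by rewrite -AB inE uA uB.
  have vS1 : (v \in S1) = false by rewrite -AB inE vA vB.
  have hu : forall z, z \in A -> z != w -> ~~ e u z.
    move=> z zA zw; apply/negP => uz.
    have := su w z; rewrite !nbE wu uz eq_sym zw => /(_ isT isT isT) wz.
    by move: (iA _ _ wA zA); rewrite wz.
  have hv : forall z, z \in A -> z != w -> ~~ e v z.
    move=> z zA zw; apply/negP => vz.
    have := sv w z; rewrite !nbE wv vz eq_sym zw => /(_ isT isT isT) wz.
    by move: (iA _ _ wA zA); rewrite wz.
  have nvu : ~~ e v u by rewrite sym.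
  exists (u |: (v |: (S1 :\ w))); split.
    exists (u |: (v |: (A :\ w))), B; split => //.
    - rewrite -AB; apply/setP => z; rewrite !inE.
      by case: (z =P w) => [->|]; rewrite ?wB ?wA ?orbF //=; case: (z \in A); case: (z \in B); rewrite ?orbT ?orbF.
    - rewrite -setI_eq0; apply/eqP/setP => z; rewrite !inE.
      case: (z =P u) => [->|]; rewrite ?uB ?andbF //.
      case: (z =P v) => [->|]; rewrite ?vB ?andbF //= => _ _.
      by case zA : (z \in A); rewrite ?andbF //= (disjointFr dAB zA) andbF.
    - move=> a b; rewrite !inE.
      move=> /or3P[/eqP->|/eqP->|/andP[aw aA]] /or3P[/eqP->|/eqP->|/andP[bw bA]];
        idtac.
      + by rewrite irr.
      + exact: nuv.
      + exact: hu.
      + exact: nvu.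
      + by rewrite irr.
      + exact: hv.
      + by rewrite sym; apply: hu.
      + by rewrite sym; apply: hv.
      + exact: iA.
  rewrite !cardsU1 !inE (negbTE uv) uS1 vS1 !andbF /= (cardsD1 w S1) wS1.
  by [].
have hS1' := hS1.
case: hS1' => [A [B [AB dAB iA iB]]].
have [S' [bS' ltS']] : exists S' : {set T}, induces_bipartite e S' /\ #|S1| < #|S'|.
  have : w \in A :|: B by rewrite AB.
  rewrite inE => /orP[wA|wB].
    exact: key AB dAB iA iB wA.
  by apply: (key B A) => //; [rewrite setUC | rewrite disjoint_sym].
have [S2 [bS2 sub2 mx2]] := @exists_max _ _ _ bS'.
have := wb S1 S2 (conj hS1 mx1) (conj bS2 mx2).
have := subset_leq_card sub2.
move: ltS'; clear; lia.
Qed.
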